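(* Let $0\le\alpha\le\tfrac12$, let $X$ be uniformly distributed on $\{-1,1\}^n$, and let $Y_i=X_iZ_i$ for $i=1,\dots,n$, where $Z_1,\dots,Z_n$ are i.i.d., independent of $X$, with $\Pr(Z_i=-1)=\alpha$, $\Pr(Z_i=1)=1-\alpha$. For a Boolean function $f:\{-1,1\}^n\to\{-1,1\}$ and $y\in\{-1,1\}^n$ let $P_y^f=\Pr(f(X)=-1\mid Y=y)$. Let $k\ge1$ be an integer satisfying $(1-2\alpha)\sqrt{2k-1}\le 1$. Then for any balanced Boolean function $f:\{-1,1\}^n\to\{-1,1\}$ (i.e., $\Pr(f(X)=-1)=\tfrac12$), \[ \mathbb{E}_Y\left((1-2P_Y^{f})^{2k}\right)\le (2k-1)^{k}(1-2\alpha)^{2k}. \] *)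

(* Defs.v *)
From mathcomp Require Import all_boot all_order all_algebra.
From mathcomp Require Import reals.
Set Implicit Arguments. Unset Strict Implicit. Unset Printing Implicit Defensive.
Import Order.TTheory GRing.Theory Num.Theory.
Local Open Scope ring_scope.

(* Encoding of {-1,1}: a boolean b stands for the sign [sgnb b]
   (true <-> -1, false <-> +1).  Under this encoding the product of two
   signs corresponds to [xorb]:  sgnb (xorb a b) = sgnb a * sgnb b. *)
Definition sgnb {R : pzRingType} (b : bool) : R := if b then -1 else 1.

Definition cube (n : nat) := {ffun 'I_n -> bool}.

Section Model.
Variables (R : realType) (n : nat) (alpha : R).

Definition pZ (b : bool) : R := if b then alpha else 1 - alpha.

Definition prXZ (x z : cube n) : R := (2 ^+ n)^-1 * \prod_(i < n) pZ (z i).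

Definition Yof (x z : cube n) : cube n := [ffun i => xorb (x i) (z i)].

Definition PrY (y : cube n) : R :=
  \sum_(x : cube n) \sum_(z : cube n | Yof x z == y) prXZ x z.

(* Pr(f(X) = -1), for f : {-1,1}^n -> {-1,1} encoded as f x = true <-> f(x) = -1. *)
Definition Pr_f_neg (f : cube n -> bool) : R :=
  \sum_(x : cube n | f x) \sum_(z : cube n) prXZ x z.

Definition Pcond (f : cube n -> bool) (y : cube n) : R :=
  (\sum_(x : cube n | f x) \sum_(z : cube n | Yof x z == y) prXZ x z) / PrY y.

Definition EY (g : cube n -> R) : R := \sum_(y : cube n) PrY y * g y.

Definition balanced (f : cube n -> bool) : Prop := Pr_f_neg f = 2^-1.

End Model.

(* Main.v *)
Require Import Defs.
From mathcomp Require Import all_boot all_order all_algebra.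
From mathcomp Require Import reals.
From mathcomp Require Import zify ring lra.
Import Order.TTheory GRing.Theory Num.Theory.
Local Open Scope ring_scope.

Local Close Scope ring_scope.

Lemma binle k j : ('C(2 * k, 2 * j) <= 'C(k, j) * (2 * k).-1 ^ j)%N.
Proof.
elim: j => [|j IH]; first by rewrite !bin0 expn0.
have e1 := mul_bin_left (2 * k) (2 * j).
have e2 := mul_bin_left (2 * k) (2 * j).+1.
have e3 := mul_bin_left k j.
have -> : (2 * j.+1 = (2 * j).+2)%N by lia.
set X := 'C(2 * k, 2 * j) in IH e1 *.
set X1 := 'C(2 * k, (2 * j).+1) in e1 e2 *.
set X2 := 'C(2 * k, (2 * j).+2) in e2 *.
set Y := 'C(k, j) in IH e3 *. set Y1 := 'C(k, j.+1) in e3 *.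
set P := ((2 * k).-1 ^ j)%N in IH *.
rewrite expnS.
have h4 : ((2 * k - (2 * j).+1) <= (2 * k).-1 * (2 * j).+1)%N by nia.
rewrite -(@leq_pmul2r ((2 * j).+1 * (2 * j).+2)) //.
have -> : (X2 * ((2 * j).+1 * (2 * j).+2) = X * (2 * k - 2 * j) * (2 * k - (2 * j).+1))%N.
  transitivity ((2 * j).+1 * ((2 * j).+2 * X2))%N; first by rewrite mulnA mulnC; lia.
  rewrite e2 mulnCA e1. lia.
have -> : (Y1 * ((2 * k).-1 * P) * ((2 * j).+1 * (2 * j).+2) = 2 * (Y1 * j.+1) * P * ((2 * k).-1 * (2 * j).+1))%N by lia.
rewrite [(Y1 * _)%N]mulnC e3.
have -> : (2 * k - 2 * j = 2 * (k - j))%N by lia.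
have h5 : (X * (2 * (k - j)) <= 2 * ((k - j) * Y) * P)%N.
  have -> : (2 * ((k - j) * Y) * P = (Y * P) * (2 * (k - j)))%N by lia.
  exact: leq_mul.
exact: leq_mul.
Qed.


Local Open Scope ring_scope.
Lemma sum_evenodd (R : zmodType) (F : nat -> R) k :
  \sum_(i < (2 * k).+1) F i = \sum_(j < k.+1) F (2 * j)%N + \sum_(j < k) F (2 * j).+1%N.
Proof.
elim: k => [|k IH]; first by rewrite !big_ord_recr !big_ord0 /= !add0r addr0.
have -> : (2 * k.+1).+1 = ((2 * k).+1).+2 by rewrite mulnS.
rewrite [LHS]big_ord_recr [in LHS]big_ord_recr /= IH.
rewrite [\sum_(j < k.+2) _]big_ord_recr [\sum_(j < k.+1) F (2 * j).+1%N]big_ord_recr /=.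
have -> : (2 * k.+1 = (2 * k).+2)%N by rewrite mulnS.
by rewrite -!addrA; congr (_ + _); rewrite [RHS]addrC -addrA.
Qed.

Lemma twopoint (R : realFieldType) (a x : R) k :
  ((a + x) ^+ (2 * k) + (a - x) ^+ (2 * k)) / 2
    <= (a ^+ 2 + ((2 * k).-1)%:R * x ^+ 2) ^+ k.
Proof.
rewrite !exprDn -big_split /=.
rewrite (sum_evenodd _ (fun i : nat => a ^+ (2 * k - i) * x ^+ i *+ 'C(2 * k, i) +
   a ^+ (2 * k - i) * (- x) ^+ i *+ 'C(2 * k, i))).
rewrite [\sum_(j < k) _]big1 ?addr0; last first.
  move=> j _; rewrite !exprSr !exprM sqrrN !mulrN.
  by rewrite -mulrnDl subrr mul0rn.
rewrite mulr_suml; apply: ler_sum => j _.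
have h2 : forall t : R, (t + t) / 2 = t.
  by move=> t; lra.
rewrite !exprM sqrrN h2.
have -> : ((2 * k).-1%:R * x ^+ 2) ^+ j = ((2 * k).-1 ^ j)%N%:R * x ^+ 2 ^+ j :> R by rewrite exprMn natrX.
rewrite -mulnBr exprM.
rewrite -[_ *+ 'C(2 * k, _)]mulr_natr -[_ *+ 'C(k, _)]mulr_natr.
set A := a ^+ 2 ^+ (k - j). set X := x ^+ 2 ^+ j.
have -> : A * ((((2 * k).-1 ^ j)%N)%:R * X) * ('C(k, j))%:R =
   A * X * ((((2 * k).-1 ^ j)%N)%:R * ('C(k, j))%:R) by ring.
rewrite ler_wpM2l //; first by rewrite /A /X mulr_ge0 // exprn_ge0 // sqr_ge0.
by rewrite -natrM ler_nat (mulnC _ 'C(k, j)) binle.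
Qed.


Lemma amgm (R : realFieldType) (u v : R) p j : 0 <= u -> 0 <= v ->
  (p + j)%:R * (u ^+ p * v ^+ j) <= p%:R * u ^+ (p + j) + j%:R * v ^+ (p + j).
Proof.
move=> u0 v0.
case k0: (p + j)%N => [|k].
  by move/eqP: k0; rewrite addn_eq0 => /andP[/eqP-> /eqP->]; rewrite !mul0r addr0.
rewrite -k0.
pose E := fun i : 'I_(p + j) => if (i < p)%N then u ^+ (p + j) else v ^+ (p + j).
have hE : {in predT, forall i, 0 <= E i}.
  by move=> i _; rewrite /E; case: ifP => _; rewrite exprn_ge0.
have H := (leif_AGM hE).1.
have cT : #|(predT : {pred 'I_(p + j)})| = (p + j)%N by rewrite cardT size_enum_ord.
rewrite cT in H.
have sp : \prod_(i in predT) E i = (u ^+ p * v ^+ j) ^+ (p + j).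
  rewrite big_mkcond /= big_split_ord /=.
  rewrite (eq_bigr (fun _ => u ^+ (p + j))); last by move=> i _; rewrite /E /= ltn_ord.
  rewrite [X in _ * X](eq_bigr (fun _ => v ^+ (p + j))); last by move=> i _; rewrite /E /= ltnNge leq_addr.
  by rewrite !prodr_const !card_ord exprMn -!exprM (mulnC p) (mulnC j).
have ss : \sum_(i in predT) E i = p%:R * u ^+ (p + j) + j%:R * v ^+ (p + j).
  rewrite big_mkcond /= big_split_ord /=.
  rewrite (eq_bigr (fun _ => u ^+ (p + j))); last by move=> i _; rewrite /E /= ltn_ord.
  rewrite [X in _ + X](eq_bigr (fun _ => v ^+ (p + j))); last by move=> i _; rewrite /E /= ltnNge leq_addr.
  by rewrite !sumr_const !card_ord !mulr_natl.
rewrite sp ss in H.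
have kp : (0 < p + j)%N by rewrite k0.
rewrite (ler_pXn2r kp) in H; last first.
- by rewrite qualifE /= divr_ge0 // addr_ge0 // mulr_ge0 // exprn_ge0.
- by rewrite qualifE /= mulr_ge0 // exprn_ge0.
rewrite -ler_pdivlMl ?ltr0n //.
by rewrite [_^-1 * _]mulrC.
Qed.

Section Mink.
Variables (R : realFieldType) (T : finType) (mu : T -> R).
Hypothesis mu0 : forall t, 0 <= mu t.

Lemma zero_sum (W : T -> R) : (forall t, 0 <= W t) ->
  \sum_t mu t * W t <= 0 -> forall t, mu t * W t = 0.
Proof.
move=> W0 H t.
have hs : \sum_t mu t * W t = 0.
  by apply/le_anti; rewrite H sumr_ge0 // => i _; rewrite mulr_ge0.
by apply: (psumr_eq0P _ hs) => // i _; rewrite mulr_ge0.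
Qed.

Lemma mixed (U V : T -> R) a b p j :
  (forall t, 0 <= U t) -> (forall t, 0 <= V t) -> 0 <= a -> 0 <= b ->
  \sum_t mu t * U t ^+ (p + j) <= a ^+ (p + j) ->
  \sum_t mu t * V t ^+ (p + j) <= b ^+ (p + j) ->
  \sum_t mu t * (U t ^+ p * V t ^+ j) <= a ^+ p * b ^+ j.
Proof.
move=> U0 V0 a0 b0 HU HV.
case: p HU HV => [|p] HU HV.
  by rewrite expr0 mul1r; under eq_bigr do rewrite expr0 mul1r.
case: j HU HV => [|j] HU HV.
  by rewrite expr0 mulr1; under eq_bigr do rewrite expr0 mulr1; rewrite addn0 in HU.
have [ea|an0] := eqVneq a 0.
  rewrite ea in HU *; rewrite expr0n /= mul0r.
  have Z := zero_sum _ (fun t => exprn_ge0 (p.+1 + j.+1) (U0 t)).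
  rewrite expr0n /= in HU; have {}Z := Z HU.
  rewrite big1 // => t _.
  have := Z t; move/eqP; rewrite mulf_eq0 expf_eq0 /= => /orP[/eqP->|/eqP->].
    by rewrite mul0r.
  by rewrite expr0n /= ?mul0r ?mulr0 ?mul0r.
have [eb|bn0] := eqVneq b 0.
  rewrite eb in HV *; rewrite expr0n /= mulr0.
  have Z := zero_sum _ (fun t => exprn_ge0 (p.+1 + j.+1) (V0 t)).
  rewrite expr0n /= in HV; have {}Z := Z HV.
  rewrite big1 // => t _.
  have := Z t; move/eqP; rewrite mulf_eq0 expf_eq0 /= => /orP[/eqP->|/eqP->].
    by rewrite mul0r.
  by rewrite expr0n /= ?mul0r ?mulr0 ?mul0r.
have ap : 0 < a by rewrite lt0r an0.
have bp : 0 < b by rewrite lt0r bn0.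
set k := (p.+1 + j.+1)%N in HU HV *.
have kp : (0 < k)%N by rewrite /k addSn.
have H1 : forall t, k%:R * (mu t * ((U t / a) ^+ p.+1 * (V t / b) ^+ j.+1)) <=
   p.+1%:R * (mu t * (U t / a) ^+ k) + j.+1%:R * (mu t * (V t / b) ^+ k).
  move=> t; have h := @amgm _ _ _ p.+1 j.+1 (divr_ge0 (U0 t) a0) (divr_ge0 (V0 t) b0).
  have h' := ler_wpM2l (mu0 t) h.
  rewrite /k; apply: le_trans (le_trans h' _) => //.
    by rewrite mulrCA.
  by rewrite mulrDr mulrCA [mu t * (_ * _)]mulrCA.
have H2 : \sum_t k%:R * (mu t * ((U t / a) ^+ p.+1 * (V t / b) ^+ j.+1)) <= \sum_t (p.+1%:R * (mu t * (U t / a) ^+ k) + j.+1%:R * (mu t * (V t / b) ^+ k)) by apply: ler_sum => t _; apply: H1.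
rewrite -mulr_sumr big_split /= -!mulr_sumr in H2.
have eU : \sum_t mu t * (U t / a) ^+ k = (\sum_t mu t * U t ^+ k) / a ^+ k.
  by rewrite mulr_suml; apply: eq_bigr => t _; rewrite expr_div_n mulrA.
have eV : \sum_t mu t * (V t / b) ^+ k = (\sum_t mu t * V t ^+ k) / b ^+ k.
  by rewrite mulr_suml; apply: eq_bigr => t _; rewrite expr_div_n mulrA.
have eM : \sum_t mu t * ((U t / a) ^+ p.+1 * (V t / b) ^+ j.+1) =
   (\sum_t mu t * (U t ^+ p.+1 * V t ^+ j.+1)) / (a ^+ p.+1 * b ^+ j.+1).
  rewrite mulr_suml; apply: eq_bigr => t _; rewrite !expr_div_n.
  by rewrite invfM; ring.
rewrite eU eV eM in H2.
have apk : 0 < a ^+ k by rewrite exprn_gt0.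
have bpk : 0 < b ^+ k by rewrite exprn_gt0.
have hu : (\sum_t mu t * U t ^+ k) / a ^+ k <= 1 by rewrite ler_pdivrMr // mul1r.
have hv : (\sum_t mu t * V t ^+ k) / b ^+ k <= 1 by rewrite ler_pdivrMr // mul1r.
have H3 : k%:R * ((\sum_t mu t * (U t ^+ p.+1 * V t ^+ j.+1)) / (a ^+ p.+1 * b ^+ j.+1)) <= k%:R * 1.
  apply: (le_trans H2).
  rewrite /k natrD mulr1; apply: lerD.
    by rewrite -[X in _ <= X]mulr1 ler_wpM2l.
  by rewrite -[X in _ <= X]mulr1 ler_wpM2l.
rewrite ler_pM2l ?ltr0n // in H3.
by rewrite ler_pdivrMr ?mul1r // in H3; rewrite mulr_gt0 // exprn_gt0.
Qed.

Lemma mink (U V : T -> R) a b k :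
  (forall t, 0 <= U t) -> (forall t, 0 <= V t) -> 0 <= a -> 0 <= b ->
  \sum_t mu t * U t ^+ k <= a ^+ k ->
  \sum_t mu t * V t ^+ k <= b ^+ k ->
  \sum_t mu t * (U t + V t) ^+ k <= (a + b) ^+ k.
Proof.
move=> U0 V0 a0 b0 HU HV.
under eq_bigr do rewrite exprDn mulr_sumr.
rewrite exchange_big /= exprDn; apply: ler_sum => i _.
under eq_bigr do rewrite mulrnAr.
rewrite sumrMnl lerMn2r; apply/orP; right.
have ik : (i <= k)%N by rewrite -ltnS.
have e : (k - i + i = k)%N by rewrite subnK.
apply: mixed => //; by rewrite e.
Qed.
End Mink.

Set Implicit Arguments. Unset Strict Implicit. Unset Printing Implicit Defensive.

Section Cube.
Variables (R : realType) (alpha : R).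

Definition consF n (b : bool) (x : cube n) : cube n.+1 :=
  [ffun i => if unlift ord0 i is Some j then x j else b].
Definition tailF n (x : cube n.+1) : cube n := [ffun j => x (lift ord0 j)].

Lemma consF0 n b (x : cube n) : consF b x ord0 = b.
Proof. by rewrite /consF ffunE unlift_none. Qed.
Lemma consFS n b (x : cube n) j : consF b x (lift ord0 j) = x j.
Proof. by rewrite /consF ffunE liftK. Qed.
Lemma consF_tail n (x : cube n.+1) : consF (x ord0) (tailF x) = x.
Proof.
apply/ffunP => i; rewrite /consF ffunE.
by case: unliftP => [j ->|->] //; rewrite ffunE.
Qed.
Lemma tail_consF n b (x : cube n) : tailF (consF b x) = x.
Proof. by apply/ffunP => j; rewrite ffunE consFS. Qed.

Lemma sum_cubeS n (F : cube n.+1 -> R) :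
  \sum_x F x = \sum_(x : cube n) F (consF true x) + \sum_(x : cube n) F (consF false x).
Proof.
transitivity (\sum_(b : bool) \sum_(x : cube n) F (consF b x)); last by rewrite big_bool.
rewrite pair_big /=.
rewrite (reindex (fun p : bool * cube n => consF p.1 p.2)) /=; last first.
  exists (fun x : cube n.+1 => (x ord0, tailF x)) => [[b x] _|x _] /=.
    by rewrite consF0 tail_consF.
  by rewrite consF_tail.
by apply: eq_bigl => -[].
Qed.

Lemma sum_cube0 (F : cube 0 -> R) (y : cube 0) : \sum_x F x = F y.
Proof.
rewrite (big_pred1 y) // => x /=; apply/esym/eqP/ffunP => i; case: i => //.
Qed.

Definition w n (z : cube n) : R := \prod_(i < n) pZ alpha (z i).
Definition Tn n (h : cube n -> R) (y : cube n) : R := \sum_z w z * h (Yof y z).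
Definition En n (F : cube n -> R) : R := \sum_y (2 ^+ n)^-1 * F y.

Lemma w_consF n b (z : cube n) : w (consF b z) = pZ alpha b * w z.
Proof.
by rewrite /w big_ord_recl consF0; congr (_ * _); apply: eq_bigr => i _; rewrite consFS.
Qed.

Lemma Yof_consF n b c (x z : cube n) :
  Yof (consF b x) (consF c z) = consF (xorb b c) (Yof x z).
Proof.
apply/ffunP => i; rewrite /Yof /consF !ffunE.
by case: unlift => [j|]; rewrite ?ffunE.
Qed.

Lemma Tn_consF n (h : cube n.+1 -> R) b (y : cube n) :
  Tn h (consF b y) = pZ alpha true * Tn (fun x => h (consF (xorb b true) x)) y
                   + pZ alpha false * Tn (fun x => h (consF (xorb b false) x)) y.
Proof.
rewrite /Tn sum_cubeS !mulr_sumr; congr (_ + _); apply: eq_bigr => z _;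
  by rewrite w_consF Yof_consF mulrA.
Qed.

Lemma Tn_lin n (F G : cube n -> R) p q y :
  Tn (fun x => p * F x + q * G x) y = p * Tn F y + q * Tn G y.
Proof.
rewrite /Tn !mulr_sumr -big_split /=; apply: eq_bigr => z _; ring.
Qed.

Lemma En_lin n (F G : cube n -> R) p q :
  En (fun x => p * F x + q * G x) = p * En F + q * En G.
Proof.
rewrite /En !mulr_sumr -big_split /=; apply: eq_bigr => z _; ring.
Qed.

Lemma En_le n (F G : cube n -> R) : (forall x, F x <= G x) -> En F <= En G.
Proof.
move=> H; rewrite /En; apply: ler_sum => x _; rewrite ler_wpM2l // invr_ge0 exprn_ge0 //.
Qed.

Lemma En_ge0 n (F : cube n -> R) : (forall x, 0 <= F x) -> 0 <= En F.
Proof.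
move=> H; rewrite /En; apply: sumr_ge0 => x _; rewrite mulr_ge0 // invr_ge0 exprn_ge0 //.
Qed.

Lemma En_S n (F : cube n.+1 -> R) :
  En F = (En (fun x => F (consF true x)) + En (fun x => F (consF false x))) / 2.
Proof.
rewrite /En sum_cubeS exprS invfM mulrDl !mulr_suml; congr (_ + _);
  by apply: eq_bigr => x _; ring.
Qed.

Lemma En_0 (F : cube 0 -> R) y : En F = F y.
Proof. by rewrite /En (sum_cube0 _ y) expr0 invr1 mul1r. Qed.

Lemma Tn_0 (h : cube 0 -> R) y : Tn h y = h y.
Proof.
rewrite /Tn (sum_cube0 _ y) /w big_ord0 mul1r; congr h.
by apply/ffunP => -[].
Qed.

Lemma jensen n (h : cube n -> R) : En h ^+ 2 <= En (fun x => h x ^+ 2).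
Proof.
elim: n h => [|n IH] h.
  by rewrite !(En_0 _ [ffun i => false]).
rewrite !En_S.
have H1 := IH (fun x => h (consF true x)).
have H2 := IH (fun x => h (consF false x)).
set a := En _ in H1 *. set b := En _ in H2 *.
set a2 := En _ in H1 *. set b2 := En _ in H2 *.
have := sqr_ge0 (a - b); nra.
Qed.


Lemma En_ext n (F G : cube n -> R) : (forall x, F x = G x) -> En F = En G.
Proof. by move=> H; apply: eq_bigr => x _; rewrite H. Qed.

Definition Qf n c (h : cube n -> R) := (1 - c) * En h ^+ 2 + c * En (fun x => h x ^+ 2).

Lemma Qf_ge0 n c (h : cube n -> R) : 0 <= c -> c <= 1 -> 0 <= Qf c h.
Proof.
move=> c0 c1; rewrite /Qf addr_ge0 // mulr_ge0 ?subr_ge0 ?sqr_ge0 //.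
by apply: En_ge0 => x; rewrite sqr_ge0.
Qed.

Lemma Qstep n c (h : cube n.+1 -> R) : 0 <= c -> c <= 1 ->
  Qf c (fun x => 2^-1 * h (consF true x) + 2^-1 * h (consF false x)) +
  c * Qf c (fun x => 2^-1 * h (consF false x) + - 2^-1 * h (consF true x)) <= Qf c h.
Proof.
move=> c0 c1.
set ht := fun x => h (consF true x).
set hf := fun x => h (consF false x).
set h0 := fun x => 2^-1 * ht x + 2^-1 * hf x.
set h1 := fun x => 2^-1 * hf x + (- 2^-1) * ht x.
have Em : En h = En h0.
  rewrite En_S /h0 En_lin -/ht -/hf.
  move: (En ht) (En hf) => u v; lra.
have E2 : En (fun x => h x ^+ 2) = En (fun x => h0 x ^+ 2) + En (fun x => h1 x ^+ 2).
  rewrite En_S /=.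
  have -> : En (fun x => h0 x ^+ 2) + En (fun x => h1 x ^+ 2) =
     En (fun x => 1 * h0 x ^+ 2 + 1 * h1 x ^+ 2) by rewrite En_lin !mul1r.
  have -> : En (fun x => 1 * h0 x ^+ 2 + 1 * h1 x ^+ 2) =
     En (fun x => 2^-1 * ht x ^+ 2 + 2^-1 * hf x ^+ 2).
    apply: En_ext => x; rewrite /h0 /h1; move: (ht x) (hf x) => u v; lra.
  rewrite En_lin -/ht -/hf.
  move: (En _) (En _) => u v; lra.
have J := jensen h1.
rewrite /Qf Em E2.
move: J; set m := En h0; set m1 := En h1.
set s1 := En (fun x => h1 x ^+ 2); set s0 := En (fun x => h0 x ^+ 2).
move=> J.
have c1' : 0 <= 1 - c by rewrite subr_ge0.
have J' : 0 <= s1 - m1 ^+ 2 by rewrite subr_ge0.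
have := mulr_ge0 (mulr_ge0 c0 c1') J'.
clearbody m m1 s0 s1; clear -c0 c1.
nra.
Qed.

Lemma hyper k c : 0 <= c -> c <= 1 -> c = ((2 * k).-1)%:R * (1 - 2 * alpha) ^+ 2 ->
  forall n (h : cube n -> R), En (fun y => Tn h y ^+ (2 * k)) <= Qf c h ^+ k.
Proof.
move=> c0 c1 cdef; elim=> [|n IH] h.
  set y0 : cube 0 := [ffun i => false].
  rewrite /Qf !(En_0 _ y0) Tn_0 exprM.
  by rewrite -mulrDl subrK mul1r.
set ht := fun x => h (consF true x).
set hf := fun x => h (consF false x).
set h0 := fun x => 2^-1 * ht x + 2^-1 * hf x.
set h1 := fun x => 2^-1 * hf x + (- 2^-1) * ht x.
set rho := 1 - 2 * alpha.
have TF : forall y, Tn h (consF false y) = Tn h0 y + rho * Tn h1 y.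
  move=> y; rewrite Tn_consF /= /h0 /h1 !Tn_lin /rho /pZ -/ht -/hf; lra.
have TT : forall y, Tn h (consF true y) = Tn h0 y - rho * Tn h1 y.
  move=> y; rewrite Tn_consF /= /h0 /h1 !Tn_lin /rho /pZ -/ht -/hf; lra.
set A := Tn h0. set B := Tn h1.
have mu0 : forall y : cube n, 0 <= (fun _ => (2 ^+ n)^-1 : R) y.
  by move=> y; rewrite invr_ge0 exprn_ge0.
have L1 : En (fun y => Tn h y ^+ (2 * k)) =
    En (fun y => 2^-1 * (A y + rho * B y) ^+ (2 * k) + 2^-1 * (A y - rho * B y) ^+ (2 * k)).
  rewrite En_S En_lin /=.
  rewrite (En_ext (fun x => congr1 (fun t => t ^+ (2 * k)) (TT x))) (En_ext (fun x => congr1 (fun t => t ^+ (2 * k)) (TF x))) /=.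
  by rewrite mulrDl addrC; congr (_ + _); rewrite mulrC.
have L2 : En (fun y => 2^-1 * (A y + rho * B y) ^+ (2 * k) + 2^-1 * (A y - rho * B y) ^+ (2 * k))
    <= En (fun y => (A y ^+ 2 + c * B y ^+ 2) ^+ k).
  apply: En_le => y.
  have := @twopoint _ (A y) (rho * B y) k.
  move=> H; rewrite cdef; apply: le_trans (le_trans _ H) _.
    by rewrite [in X in _ <= X]mulrC [in X in _ <= X]mulrDr lexx.
  by rewrite /rho exprMn mulrA lexx.
have HU : \sum_y (fun _ => (2 ^+ n)^-1 : R) y * (A y ^+ 2) ^+ k <= Qf c h0 ^+ k.
  by apply: le_trans (IH h0); apply: ler_sum => y _; rewrite -exprM.
have HV : \sum_y (fun _ => (2 ^+ n)^-1 : R) y * (c * B y ^+ 2) ^+ k <= (c * Qf c h1) ^+ k.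
  rewrite exprMn; apply: le_trans (ler_wpM2l (exprn_ge0 k c0) (IH h1)).
  rewrite /En mulr_sumr; apply: ler_sum => y _ /=; rewrite exprMn -exprM.
  by rewrite mulrCA.
have M := @mink _ _ (fun _ => (2 ^+ n)^-1 : R) mu0 (fun y => A y ^+ 2) (fun y => c * B y ^+ 2)
  (Qf c h0) (c * Qf c h1) k (fun y => sqr_ge0 (A y)) (fun y => mulr_ge0 c0 (sqr_ge0 (B y)))
  (Qf_ge0 h0 c0 c1) (mulr_ge0 c0 (Qf_ge0 h1 c0 c1)) HU HV.
rewrite L1; apply: (le_trans L2); apply: (le_trans M).
apply: lerXn2r.
- by rewrite qualifE /= addr_ge0 ?Qf_ge0 // mulr_ge0 // Qf_ge0.
- by rewrite qualifE /= Qf_ge0.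
exact: Qstep.
Qed.

Lemma YofK n (x y : cube n) : Yof (Yof x y) y = x.
Proof. by apply/ffunP => i; rewrite !ffunE; case: (x i); case: (y i). Qed.
Lemma YofK2 n (x y : cube n) : Yof y (Yof x y) = x.
Proof. by apply/ffunP => i; rewrite !ffunE; case: (x i); case: (y i). Qed.
Lemma Yof_eq n (x y z : cube n) : (Yof x z == y) = (z == Yof x y).
Proof.
apply/eqP/eqP => [<-|->]; apply/ffunP => i; rewrite !ffunE;
  by case: (x i); case: (z i) => //; case: (y i).
Qed.

Lemma sum_w n : \sum_(z : cube n) w z = 1.
Proof.
rewrite /w -(bigA_distr_bigA (fun (i : 'I_n) (b : bool) => pZ alpha b)) /=.
by apply: big1 => i _; rewrite big_bool /pZ /=; ring.
Qed.

Lemma sum_w_shift n (y : cube n) : \sum_(x : cube n) w (Yof x y) = 1.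
Proof.
have hi : injective (fun x : cube n => Yof x y) := @can_inj _ _ _ (fun x => Yof x y) (fun x => YofK x y).
by rewrite -(sum_w n) [RHS](reindex_inj hi).
Qed.

Lemma sgn_split n (F : cube n -> R) (f : cube n -> bool) :
  \sum_x F x * sgnb (f x) = \sum_x F x - 2 * \sum_(x | f x) F x.
Proof.
rewrite [X in _ = X - _](bigID (fun x => f x)) /= [\sum_x F x * _](bigID (fun x => f x)) /=.
rewrite (eq_bigr (fun x => - F x)); last by move=> x ->; rewrite /sgnb mulrN1.
rewrite [X in _ + X = _](eq_bigr F); last by move=> x /negbTE ->; rewrite /sgnb mulr1.
rewrite sumrN; set u := \sum_(x | f x) F x; set v := \sum_(x | ~~ f x) F x.
clearbody u v; lra.
Qed.

Lemma inner n (x y : cube n) (F : cube n -> R) :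
  \sum_(z | Yof x z == y) F z = F (Yof x y).
Proof. by rewrite (big_pred1 (Yof x y)) // => z; rewrite /= Yof_eq. Qed.

Lemma PrY_eq n (y : cube n) : PrY alpha y = (2 ^+ n)^-1.
Proof.
rewrite /PrY (eq_bigr (fun x => (2 ^+ n)^-1 * w (Yof x y))); last first.
  by move=> x _; rewrite inner.
by rewrite -mulr_sumr sum_w_shift mulr1.
Qed.

Lemma Pcond_eq n f (y : cube n) :
  Pcond alpha f y = \sum_(x | f x) w (Yof x y).
Proof.
rewrite /Pcond PrY_eq (eq_bigr (fun x => (2 ^+ n)^-1 * w (Yof x y))); last first.
  by move=> x _; rewrite inner.
by rewrite -mulr_sumr mulrC mulrA mulVf ?mul1r // invr_eq0 expf_neq0 // pnatr_eq0.
Qed.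

Lemma Tn_sgn n f (y : cube n) :
  Tn (fun x => sgnb (f x)) y = 1 - 2 * Pcond alpha f y.
Proof.
have hi : injective (fun x : cube n => Yof x y) := @can_inj _ _ _ (fun x => Yof x y) (fun x => YofK x y).
rewrite Pcond_eq /Tn (reindex_inj hi).
under eq_bigr do rewrite YofK2.
by rewrite sgn_split sum_w_shift.
Qed.
End Cube.

Lemma sum_const_cube (R : realType) n : \sum_(x : cube n) (2 ^+ n)^-1 = 1 :> R.
Proof.
rewrite sumr_const card_ffun card_bool card_ord -(mulr_natr _ (2 ^ n)) natrX mulVf //.
by rewrite expf_neq0 // pnatr_eq0.
Qed.

Unset Implicit Arguments.
Theorem lemma1 (R : realType) (alpha : R) (n k : nat)
  (ha0 : 0 <= alpha) (ha1 : alpha <= 2^-1) (hk : (1 <= k)%N)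
  (hcond : (1 - 2 * alpha) * Num.sqrt ((2 * k).-1)%:R <= 1)
  (f : cube n -> bool) (hf : @balanced R n alpha f) :
  @EY R n alpha (fun y => (1 - 2 * @Pcond R n alpha f y) ^+ (2 * k))
    <= ((2 * k).-1)%:R ^+ k * (1 - 2 * alpha) ^+ (2 * k).
Proof.
pose g := fun x => sgnb (f x) : R.
have rho0 : 0 <= 1 - 2 * alpha by lra.
have d0 : 0 <= ((2 * k).-1)%:R :> R by [].
pose c := ((2 * k).-1)%:R * (1 - 2 * alpha) ^+ 2 : R.
have c0 : 0 <= c by rewrite /c mulr_ge0 // sqr_ge0.
have c1 : c <= 1.
  have h2 : ((1 - 2 * alpha) * Num.sqrt ((2 * k).-1)%:R) ^+ 2 <= 1 ^+ 2.
    by apply: lerXn2r => //; rewrite qualifE /= ?ler01 // mulr_ge0 // sqrtr_ge0.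
  by rewrite exprMn sqr_sqrtr // expr1n mulrC in h2.
have EYe : @EY R n alpha (fun y => (1 - 2 * @Pcond R n alpha f y) ^+ (2 * k)) =
   En (fun y => Tn alpha g y ^+ (2 * k)).
  by rewrite /EY /En; apply: eq_bigr => y _; rewrite PrY_eq Tn_sgn.
have H := @hyper R alpha k c c0 c1 erefl n g.
have Eg : En g = 0.
  rewrite /En /g (sgn_split (fun _ => (2 ^+ n)^-1)) sum_const_cube.
  move: hf; rewrite /balanced /Pr_f_neg.
  rewrite (eq_bigr (fun _ => (2 ^+ n)^-1)); last first.
    by move=> x _; rewrite /prXZ -mulr_sumr (sum_w alpha) mulr1.
  by move=> ->; rewrite divff ?subrr // pnatr_eq0.
have Eg2 : En (fun x => g x ^+ 2) = 1.
  rewrite /En -[RHS](sum_const_cube R n); apply: eq_bigr => x _.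
  by rewrite /g /sgnb; case: (f x); rewrite ?sqrrN expr1n mulr1.
have Qg : Qf c g = c by rewrite /Qf Eg Eg2 expr0n /= mulr0 add0r mulr1.
rewrite EYe; apply: (le_trans H); rewrite Qg /c exprMn -exprM mulnC.
by [].
Qed.
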